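(* Let $n>5$ be prime and let $\Gamma_n$ be a finite multiset of elements of $\mathbb{Z}_n$ such that for every $v\in\mathbb{Z}_n$, $v\Gamma_n=\Gamma_n$ implies $v\in\{-1,0,1\}$. Let $\gamma_n$ be the uniform distribution over $\Gamma_n$. Then the random walk on $\mathbb{Z}_n$ with step distribution $\gamma_n$ is either symmetric (i.e. $\gamma_n(k)=\gamma_n(-k)$ for all $k$) or reconstructive.
   Context: For $v\in\mathbb{Z}_n$, $v\Gamma_n$ is the multiset obtained by multiplying each element of $\Gamma_n$ by $v$ in $\mathbb{Z}_n$. The uniform distribution over $\Gamma_n$ assigns $k$ probability (multiplicity of $k$)/$|\Gamma_n|$. The random walk has $v(1)$ uniform on $\mathbb{Z}_n$ and independent steps distributed by $\gamma_n$. It is reconstructive if, for any two labelings $f_1,f_2:\mathbb{Z}_n\to\{0,1\}$, the distributions of $\{f_1(v(t))\}_{t\ge1}$ and $\{f_2(v(t))\}_{t\ge1}$ coincide only if there is $\ell$ with $f_1(k)=f_2(k+\ell)$ for all $k$. *)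

(* Defs.v *)
From mathcomp Require Import all_boot all_order all_algebra.
Set Implicit Arguments. Unset Strict Implicit. Unset Printing Implicit Defensive.
Import GRing.Theory Num.Theory.
Local Open Scope ring_scope.

(* A finite multiset Gamma of elements of Z_n is represented by a sequence
   (multiplicities = number of occurrences); multiset equality is perm_eq. *)

Definition mset_scale (n : nat) (v : 'Z_n) (G : seq 'Z_n) : seq 'Z_n :=
  map (fun x => v * x) G.

Definition gamma (n : nat) (G : seq 'Z_n) (k : 'Z_n) : rat :=
  (count_mem k G)%:R / (size G)%:R.

Definition symmetric_step (n : nat) (G : seq 'Z_n) : Prop :=
  forall k : 'Z_n, gamma G k = gamma G (- k).

(* Probability that, starting from current position x, the next |w| labels
   f(v(t+1)), ..., f(v(t+|w|)) equal w, with i.i.d. steps uniform on Gamma. *)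
Fixpoint path_prob (n : nat) (G : seq 'Z_n) (f : 'Z_n -> bool) (x : 'Z_n)
    (w : seq bool) : rat :=
  match w with
  | [::] => 1
  | b :: w' => \sum_(i < size G)
      ((size G)%:R^-1 * (f (x + nth 0 G i) == b)%:R
         * path_prob G f (x + nth 0 G i) w')
  end.

(* Finite-dimensional law of the label process {f(v(t))}_{t>=1}:
   P(f(v(1)) = w_1, ..., f(v(T)) = w_T), with v(1) uniform on Z_n. *)
Definition label_prob (n : nat) (G : seq 'Z_n) (f : 'Z_n -> bool)
    (w : seq bool) : rat :=
  match w with
  | [::] => 1
  | b :: w' => \sum_(x : 'Z_n)
      ((#|'Z_n|)%:R^-1 * (f x == b)%:R * path_prob G f x w')
  end.

(* Two labelings give the same distribution of the label sequence
   (equality of all finite-dimensional distributions, which determine the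
   law on {0,1}^N with the product sigma-algebra). *)
Definition same_label_law (n : nat) (G : seq 'Z_n) (f1 f2 : 'Z_n -> bool) : Prop :=
  forall w : seq bool, label_prob G f1 w = label_prob G f2 w.

Definition reconstructive (n : nat) (G : seq 'Z_n) : Prop :=
  forall f1 f2 : 'Z_n -> bool, same_label_law G f1 f2 ->
    exists l : 'Z_n, forall k : 'Z_n, f1 k = f2 (k + l).

(* Main.v *)
Require Import Defs.
From mathcomp Require Import all_boot all_order all_algebra all_field.
From Stdlib Require Import Classical.
From mathcomp Require Import ring zify.
Import GRing.Theory Num.Theory.
Set Implicit Arguments. Unset Strict Implicit. Unset Printing Implicit Defensive.
Local Open Scope ring_scope.

Fixpoint ppat (n : nat) (G : seq 'Z_n) (f : 'Z_n -> bool) (x : 'Z_n)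
    (hs : seq (bool -> rat)) : rat :=
  match hs with
  | [::] => 1
  | h :: hs' => \sum_(i < size G)
      ((size G)%:R^-1 * h (f (x + nth 0 G i)) * ppat G f (x + nth 0 G i) hs')
  end.

Definition lpat (n : nat) (G : seq 'Z_n) (f : 'Z_n -> bool)
    (hs : seq (bool -> rat)) : rat :=
  match hs with
  | [::] => 1
  | h :: hs' => \sum_(x : 'Z_n)
      ((#|'Z_n|)%:R^-1 * h (f x) * ppat G f x hs')
  end.

Fixpoint allw (m : nat) : seq (seq bool) :=
  match m with
  | 0 => [:: [::]]
  | m'.+1 => map (cons true) (allw m') ++ map (cons false) (allw m')
  end.

Fixpoint wt (hs : seq (bool -> rat)) (w : seq bool) : rat :=
  match hs, w with
  | h :: hs', b :: w' => h b * wt hs' w'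
  | _, _ => 1
  end.

Lemma ppat_path n (G : seq 'Z_n) f x hs :
  ppat G f x hs = \sum_(w <- allw (size hs)) wt hs w * path_prob G f x w.
Proof.
elim: hs x => [|h hs IH] x /=; first by rewrite big_seq1 mulr1.
rewrite big_cat !big_map /=.
under [X in _ = X + _]eq_bigr => w _ do rewrite mulr_sumr.
under [X in _ = _ + X]eq_bigr => w _ do rewrite mulr_sumr.
rewrite [X in _ = X + _]exchange_big [X in _ = _ + X]exchange_big /=.
rewrite -big_split /=; apply: eq_bigr => i _.
rewrite IH mulr_sumr -big_split /=; apply: eq_bigr => w _.
by case: (f (x + nth 0 G i)) => /=; rewrite ?mulr0 ?mul0r ?mulr1 ?add0r ?addr0; ring.
Qed.

Lemma lpat_label n (G : seq 'Z_n) f hs :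
  lpat G f hs = \sum_(w <- allw (size hs)) wt hs w * label_prob G f w.
Proof.
case: hs => [|h hs] /=; first by rewrite big_seq1 mulr1.
rewrite big_cat !big_map /=.
under [X in _ = X + _]eq_bigr => w _ do rewrite mulr_sumr.
under [X in _ = _ + X]eq_bigr => w _ do rewrite mulr_sumr.
rewrite [X in _ = X + _]exchange_big [X in _ = _ + X]exchange_big /=.
rewrite -big_split /=; apply: eq_bigr => i _.
rewrite ppat_path mulr_sumr -big_split /=; apply: eq_bigr => w _.
by case: (f i) => /=; rewrite ?mulr0 ?mul0r ?mulr1 ?add0r ?addr0; ring.
Qed.

Lemma same_lpat n (G : seq 'Z_n) f1 f2 hs :
  same_label_law G f1 f2 -> lpat G f1 hs = lpat G f2 hs.
Proof. by move=> H; rewrite !lpat_label; apply: eq_bigr => w _; rewrite H. Qed.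

Definition Pop (R : fieldType) n (G : seq 'Z_n) (u : 'Z_n -> R) (x : 'Z_n) : R :=
  \sum_(i < size G) ((size G)%:R^-1 * u (x + nth 0 G i)).

Fixpoint iterP (R : fieldType) n (G : seq 'Z_n) (k : nat) (u : 'Z_n -> R) : 'Z_n -> R :=
  match k with
  | 0 => u
  | k'.+1 => fun x => Pop G (iterP G k' u) x
  end.

Lemma Pop_ext (R : fieldType) n (G : seq 'Z_n) (u v : 'Z_n -> R) x :
  (forall y, u y = v y) -> Pop G u x = Pop G v x.
Proof. by move=> E; apply: eq_bigr => i _; rewrite E. Qed.

Lemma iterP_ext (R : fieldType) n (G : seq 'Z_n) k (u v : 'Z_n -> R) x :
  (forall y, u y = v y) -> iterP G k u x = iterP G k v x.
Proof.
elim: k x => [|k IH] x E /=; first exact: E.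
by apply: Pop_ext => y; apply: IH.
Qed.

Definition hid : bool -> rat := fun b => (b : nat)%:R.
Definition hone : bool -> rat := fun _ => 1.

Lemma ppat_ones n (G : seq 'Z_n) f x k hs :
  ppat G f x (nseq k hone ++ hs) = iterP G k (fun y => ppat G f y hs) x.
Proof.
elim: k x => [|k IH] x //=.
apply: eq_bigr => i _; by rewrite /hone mulr1 IH.
Qed.

Lemma ppat_id n (G : seq 'Z_n) f x hs :
  ppat G f x (hid :: hs) = Pop G (fun y => (f y : nat)%:R * ppat G f y hs) x.
Proof. by apply: eq_bigr => i _; rewrite mulrA. Qed.

Definition m3 (R : fieldType) n (G : seq 'Z_n) (F : 'Z_n -> R) (s t : nat) : R :=
  \sum_(x : 'Z_n) F x * iterP G s (Pop G (fun w => F w * iterP G t (Pop G F) w)) x.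

Lemma lpat_m3 n (G : seq 'Z_n) f s t :
  lpat G f (hid :: nseq s hone ++ hid :: nseq t hone ++ [:: hid]) =
  (#|'Z_n|)%:R^-1 * m3 G (fun y => (f y : nat)%:R) s t.
Proof.
rewrite /= /m3 mulr_sumr; apply: eq_bigr => x _.
rewrite -mulrA ppat_ones; congr (_ * (_ * _)).
apply: iterP_ext => y; rewrite ppat_id; apply: Pop_ext => w.
rewrite ppat_ones; congr (_ * _); apply: iterP_ext => v.
by rewrite ppat_id; apply: Pop_ext => u /=; rewrite mulr1.
Qed.

Lemma ratr_Pop n (G : seq 'Z_n) (u : 'Z_n -> rat) x :
  ratr (Pop G u x) = Pop G (fun y => (ratr (u y) : algC)) x.
Proof.
rewrite /Pop rmorph_sum; apply: eq_bigr => i _.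
by rewrite rmorphM fmorphV rmorph_nat.
Qed.

Lemma ratr_iterP n (G : seq 'Z_n) k (u : 'Z_n -> rat) x :
  ratr (iterP G k u x) = iterP G k (fun y => (ratr (u y) : algC)) x.
Proof.
elim: k x => [|k IH] x //=.
by rewrite ratr_Pop; apply: Pop_ext.
Qed.

Lemma ratr_m3 n (G : seq 'Z_n) (f : 'Z_n -> bool) s t :
  ratr (m3 G (fun y => (f y : nat)%:R) s t) = m3 G (fun y => ((f y : nat)%:R : algC)) s t.
Proof.
rewrite /m3 rmorph_sum; apply: eq_bigr => x _.
rewrite rmorphM rmorph_nat; congr (_ * _).
etransitivity; first exact: ratr_iterP.
apply: iterP_ext => y; etransitivity; first exact: ratr_Pop.
apply: Pop_ext => w.
rewrite rmorphM rmorph_nat; congr (_ * _).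
etransitivity; first exact: ratr_iterP.
apply: iterP_ext => v; etransitivity; first exact: ratr_Pop.
by apply: Pop_ext => u; rewrite rmorph_nat.
Qed.

Lemma same_m3 n (G : seq 'Z_n) (f1 f2 : 'Z_n -> bool) s t :
  same_label_law G f1 f2 ->
  m3 G (fun y => ((f1 y : nat)%:R : algC)) s t = m3 G (fun y => ((f2 y : nat)%:R : algC)) s t.
Proof.
move=> H; rewrite -!ratr_m3; congr ratr.
have := same_lpat (hid :: nseq s hone ++ hid :: nseq t hone ++ [:: hid]) H.
rewrite !lpat_m3; apply: mulfI.
rewrite invr_eq0 pnatr_eq0 -lt0n; apply/card_gt0P; by exists 0.
Qed.

Section Fourier.
Variable n : nat.
Hypothesis n_gt1 : (1 < n)%N.
Variable z : algC.
Hypothesis zP : n.-primitive_root z.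
Variable G : seq 'Z_n.

Lemma zP' : ((Zp_trunc n).+2).-primitive_root z.
Proof. by rewrite Zp_cast. Qed.

Definition e (a : 'Z_n) : algC := z ^+ (a : nat).

Lemma eD a b : e (a + b) = e a * e b.
Proof. by rewrite /e /= (prim_expr_mod zP') exprD. Qed.

Lemma e0 : e 0 = 1.
Proof. by rewrite /e expr0. Qed.

Lemma eM a (k : 'Z_n) : e (a * k) = e a ^+ k.
Proof. by rewrite /e /= (prim_expr_mod zP') exprM. Qed.

Definition lam (j : 'Z_n) : algC :=
  (size G)%:R^-1 * \sum_(i < size G) e (-(nth 0 G i * j)).

Lemma Pop_eig k x : Pop G (fun y => e (-(y * k))) x = lam k * e (-(x * k)).
Proof.
rewrite /Pop /lam -mulrA mulr_suml mulr_sumr; apply: eq_bigr => i _.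
rewrite -eD; congr (_ * e _); ring.
Qed.

Lemma Pop_lin (I : finType) (c : I -> algC) (phi : I -> 'Z_n) x :
  Pop G (fun y => \sum_i c i * e (-(y * phi i))) x =
  \sum_i c i * lam (phi i) * e (-(x * phi i)).
Proof.
rewrite /Pop.
under eq_bigr => g _ do rewrite mulr_sumr.
rewrite exchange_big /=; apply: eq_bigr => i _.
rewrite -mulrA -Pop_eig /Pop mulr_sumr; apply: eq_bigr => g _.
by rewrite mulrCA.
Qed.

Lemma iter_lin t (I : finType) (c : I -> algC) (phi : I -> 'Z_n) x :
  iterP G t (fun y => \sum_i c i * e (-(y * phi i))) x =
  \sum_i c i * lam (phi i) ^+ t * e (-(x * phi i)).
Proof.
elim: t x => [|t IH] x /=.
  by apply: eq_bigr => i _; rewrite expr0 mulr1.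
rewrite (@Pop_ext _ _ _ _ (fun y => \sum_i (c i * lam (phi i) ^+ t) * e (-(y * phi i)))) //.
rewrite Pop_lin; apply: eq_bigr => i _; by rewrite exprSr !mulrA.
Qed.

Lemma sum_e (a : 'Z_n) : \sum_(k : 'Z_n) e (a * k) = if a == 0 then n%:R else 0.
Proof.
under eq_bigr => k _ do rewrite eM.
case: eqP => [->|/eqP a0].
  rewrite e0; under eq_bigr => k _ do rewrite expr1n.
  by rewrite sumr_const card_ord Zp_cast.
have a_pos : (0 < (a:nat))%N.
  by rewrite lt0n; apply: contra a0 => /eqP H; apply/eqP/val_inj.
have ea1 : e a != 1.
  rewrite /e -(prim_order_dvd zP'); apply/negP => /(dvdn_leq a_pos).
  by rewrite leqNgt ltn_ord.
have := subrX1 (e a) (Zp_trunc n).+2.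
rewrite /e -exprM mulnC exprM (prim_expr_order zP') expr1n subrr => /esym /eqP.
by rewrite mulf_eq0 subr_eq0 (negbTE ea1) /= => /eqP.
Qed.

Definition hat (F : 'Z_n -> algC) (k : 'Z_n) : algC := \sum_y F y * e (y * k).
Definition ac (F : 'Z_n -> algC) (k : 'Z_n) : algC := n%:R^-1 * hat F k.

Lemma n_neq0 : (n%:R : algC) != 0.
Proof. by rewrite pnatr_eq0 -lt0n ltnW. Qed.

Lemma inv F x : F x = \sum_k ac F k * e (-(x * k)).
Proof.
transitivity (n%:R^-1 * \sum_y F y * \sum_k e ((y - x) * k)).
  under eq_bigr => y _ do rewrite sum_e.
  rewrite (bigD1 x) //= subrr eqxx big1 => [|y Hy]; last by rewrite subr_eq0 (negbTE Hy) mulr0.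
  by rewrite addr0 mulrC -mulrA mulfV ?n_neq0 // mulr1.
rewrite mulr_sumr.
under eq_bigr => y _ do rewrite mulr_sumr mulr_sumr.
rewrite exchange_big /=; apply: eq_bigr => k _.
rewrite /ac /hat mulr_sumr mulr_suml; apply: eq_bigr => y _.
have -> : e ((y - x) * k) = e (y * k) * e (- (x * k)) by rewrite -eD; congr e; ring.
by rewrite !mulrA.
Qed.

Lemma iterPop_lin s (I : finType) (c : I -> algC) (phi : I -> 'Z_n) x :
  iterP G s (Pop G (fun y => \sum_i c i * e (-(y * phi i)))) x =
  \sum_i c i * lam (phi i) ^+ s.+1 * e (-(x * phi i)).
Proof.
rewrite (@iterP_ext _ _ _ _ _ (fun y => \sum_i (c i * lam (phi i)) * e (-(y * phi i)))); last first.
  by move=> y; rewrite Pop_lin.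
rewrite iter_lin; apply: eq_bigr => i _; by rewrite exprS !mulrA.
Qed.

Lemma step1 F t w :
  iterP G t (Pop G F) w = \sum_k ac F k * lam k ^+ t.+1 * e (-(w * k)).
Proof.
rewrite (@iterP_ext _ _ _ _ _ (Pop G (fun y => \sum_k ac F k * e (-(y * (fun k => k) k))))); last first.
  by move=> y; apply: Pop_ext => v; rewrite {1}(inv F v).
by rewrite iterPop_lin.
Qed.

Lemma step2 F t w :
  F w * iterP G t (Pop G F) w =
  \sum_(p : 'Z_n * 'Z_n) (ac F p.1 * (ac F p.2 * lam p.2 ^+ t.+1)) * e (-(w * (p.1 + p.2))).
Proof.
rewrite {1}(inv F w) step1 mulr_suml.
under eq_bigr => j _ do rewrite mulr_sumr.
rewrite pair_big /=; apply: eq_bigr => [[j k]] _ /=.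
have -> : e (-(w * (j + k))) = e (-(w * j)) * e (-(w * k)) by rewrite -eD; congr e; ring.
ring.
Qed.

Lemma m3_fourier F s t :
  m3 G F s t = \sum_(p : 'Z_n * 'Z_n)
    (ac F p.1 * ac F p.2 * hat F (-(p.1 + p.2))) * lam (p.1 + p.2) ^+ s.+1 * lam p.2 ^+ t.+1.
Proof.
rewrite /m3.
transitivity (\sum_x F x * iterP G s (Pop G (fun w => \sum_(p : 'Z_n * 'Z_n)
   (ac F p.1 * (ac F p.2 * lam p.2 ^+ t.+1)) * e (-(w * (fun p => p.1 + p.2) p)))) x).
  apply: eq_bigr => x _; congr (_ * _); apply: iterP_ext => y; apply: Pop_ext => w.
  exact: step2.
under eq_bigr => x _ do rewrite iterPop_lin mulr_sumr.
rewrite exchange_big /=; apply: eq_bigr => p _.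
rewrite [RHS](_ : _ = hat F (-(p.1 + p.2)) * (ac F p.1 * ac F p.2 *
   lam (p.1 + p.2) ^+ s.+1 * lam p.2 ^+ t.+1)); last ring.
rewrite /hat mulr_suml; apply: eq_bigr => x _.
rewrite mulrN; ring.
Qed.

End Fourier.

Lemma vdm1 (I : finType) (l c : I -> algC) :
  injective l -> (forall i, l i != 0) ->
  (forall s, \sum_i c i * l i ^+ s.+1 = 0) -> forall i, c i = 0.
Proof.
move=> linj lnz H i0.
pose Q : {poly algC} := 'X * \prod_(j | j != i0) ('X - (l j)%:P).
have H0 : \sum_i c i * Q.[l i] = 0.
  under eq_bigr => i _ do rewrite horner_coef mulr_sumr.
  rewrite exchange_big /=; apply: big1 => [[k Hk]] _ /=.
  case: k Hk => [|k] Hk.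
    by apply: big1 => i _; rewrite /Q coefXM /= mul0r mulr0.
  transitivity (Q`_k.+1 * \sum_i c i * l i ^+ k.+1); last by rewrite H mulr0.
  rewrite mulr_sumr; apply: eq_bigr => i _.
  by rewrite mulrCA.
have QE : forall i, Q.[l i] = l i * \prod_(j | j != i0) (l i - l j).
  move=> i; rewrite /Q hornerM hornerX horner_prod; congr (_ * _).
  by apply: eq_bigr => j _; rewrite hornerXsubC.
move: H0; rewrite (bigD1 i0) //= big1 => [|i Hi]; last first.
  by rewrite QE (bigD1 i) //= subrr mul0r !mulr0.
rewrite addr0 QE => /eqP; rewrite !mulf_eq0 (negbTE (lnz i0)) /= => /orP [/eqP //|].
rewrite prodf_seq_eq0 => /hasP [j _] /andP [ji0].
by rewrite subr_eq0 => /eqP /linj E; rewrite E eqxx in ji0.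
Qed.

Lemma vdm2 n (l : 'Z_n -> algC) (c : 'Z_n * 'Z_n -> algC) :
  injective l -> (forall i, l i != 0) ->
  (forall s t, \sum_p c p * l (p.1 + p.2) ^+ s.+1 * l p.2 ^+ t.+1 = 0) ->
  forall p, c p = 0.
Proof.
move=> linj lnz H.
have E : forall s t, \sum_p c p * l (p.1 + p.2) ^+ s.+1 * l p.2 ^+ t.+1 =
   \sum_m (\sum_k c (m - k, k) * l k ^+ t.+1) * l m ^+ s.+1.
  move=> s t.
  transitivity (\sum_j \sum_k c (j, k) * l (j + k) ^+ s.+1 * l k ^+ t.+1).
    by rewrite pair_bigA; apply: eq_bigr => [[j k]].
  rewrite exchange_big /=.
  transitivity (\sum_k \sum_m c (m - k, k) * l m ^+ s.+1 * l k ^+ t.+1).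
    apply: eq_bigr => k _.
    rewrite (reindex_inj (addIr (- k))) /=; apply: eq_bigr => m _.
    by rewrite subrK.
  rewrite exchange_big /=; apply: eq_bigr => m _.
  rewrite mulr_suml; apply: eq_bigr => k _; ring.
have K : forall t m, \sum_k c (m - k, k) * l k ^+ t.+1 = 0.
  by move=> t; apply: (vdm1 linj lnz) => s; rewrite -E H.
move=> [j k]; have := vdm1 linj lnz (fun t => K t (j + k)) k.
by rewrite addrK.
Qed.

Lemma inZp_lift n (j : 'I_(Zp_trunc n).+1) : (inZp j.+1 : 'Z_n) = lift ord0 j.
Proof. by apply: val_inj => /=; rewrite modn_small // ltnS. Qed.

Lemma LI n (z : algC) (c : 'Z_n -> rat) : prime n -> n.-primitive_root z ->
  \sum_(x : 'Z_n) ratr (c x) * z ^+ x = 0 -> forall x, c x = c 0.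
Proof.
move=> pn zP H.
have n_gt1 : (1 < n)%N by apply: prime_gt1.
have S1 : \sum_(x : 'Z_n) z ^+ x = 0.
  have := sum_e n_gt1 zP 1; rewrite oner_eq0 => E; rewrite -[RHS]E.
  by apply: eq_bigr => k _; rewrite mul1r.
have H2 : \sum_(x : 'Z_n) ratr (c x - c 0) * z ^+ x = 0.
  under eq_bigr => x _ do rewrite rmorphB mulrBl.
  by rewrite sumrB H -mulr_sumr S1 mulr0 subrr.
rewrite big_ord_recl /= subrr rmorph0 mul0r add0r in H2.
pose R : {poly rat} := \poly_(i < (Zp_trunc n).+1) (c (inZp i.+1) - c 0).
have RE : (map_poly ratr R).[z] * z = 0.
  rewrite (@horner_coef_wide _ (Zp_trunc n).+1 (map_poly ratr R) z); last first.
    by rewrite size_map_poly size_poly.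
  rewrite mulr_suml -[RHS]H2; apply: eq_bigr => j _.
  by rewrite coef_map coef_poly ltn_ord inZp_lift -mulrA -exprSr /bump leq0n add1n.
have z0 : z != 0.
  apply/eqP => z0'; move/eqP: (prim_expr_order zP).
  by rewrite z0' expr0n gtn_eqF ?prime_gt0 //= eq_sym oner_eq0.
have Rroot : root (map_poly ratr R) z.
  by move: RE => /eqP; rewrite mulf_eq0 (negbTE z0) orbF.
case: (minCpolyP z) => p0 [Emin _] Hdvd.
have Hdiv : p0 %| R by rewrite -Hdvd.
have sz : size p0 = n.
  have E1 : size (minCpoly z) = size p0 by rewrite Emin size_map_poly.
  rewrite -E1 (minCpoly_cyclotomic zP) size_cyclotomic.
  by rewrite totient_prime // prednK ?prime_gt0.
have R0 : R = 0.
  have [//|nz] := eqVneq R 0; exfalso.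
  have := dvdp_leq nz Hdiv; rewrite sz.
  have := size_poly (Zp_trunc n).+1 (fun i => c (inZp i.+1) - c 0).
  rewrite -/R; have := Zp_cast n_gt1 => K1 K2 K3.
  by have := leq_trans K3 K2; rewrite -{1}K1 ltnn.
move=> x; case: (unliftP ord0 x) => [j ->|->] //.
have : R`_j = 0 by rewrite R0 coef0.
rewrite coef_poly ltn_ord inZp_lift.
by move/eqP; rewrite subr_eq0 => /eqP.
Qed.

Lemma sum_count (T : finType) (R : pzRingType) (s : seq T) (F : T -> R) :
  \sum_(g <- s) F g = \sum_x (count_mem x s)%:R * F x.
Proof.
elim: s => [|a s IH]; first by rewrite big_nil; symmetry; apply: big1 => x _; rewrite mul0r.
rewrite big_cons IH /=.
under [RHS]eq_bigr => x _ do rewrite natrD mulrDl.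
rewrite big_split /=; congr (_ + _).
rewrite (bigD1 a) //= eqxx mul1r big1 ?addr0 // => x /negbTE xa.
by rewrite eq_sym xa mul0r.
Qed.

Lemma sum_nth n (G : seq 'Z_n) (R : pzRingType) (F : 'Z_n -> R) :
  \sum_(i < size G) F (nth 0 G i) = \sum_(g <- G) F g.
Proof. by rewrite (big_nth 0) big_mkord. Qed.

Lemma Zn_unit n (a : 'Z_n) : prime n -> a != 0 -> a \is a GRing.unit.
Proof.
move=> pn a0; have n1 := prime_gt1 pn.
rewrite -(natr_Zp a) unitZpE // prime_coprime //; apply/negP => /(dvdn_leq _).
have a_pos : (0 < (a:nat))%N.
  by rewrite lt0n; apply: contra a0 => /eqP H; apply/eqP/val_inj.
move=> /(_ a_pos); have := ltn_ord a; have := Zp_cast n1; lia.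
Qed.

Lemma Zn_natr_eq0 n k : (1 < n)%N -> ((k%:R : 'Z_n) == 0) = (n %| k)%N.
Proof.
by move=> n1; rewrite -(inj_eq val_inj) /= Zp_nat /= Zp_cast.
Qed.

Section Main.
Variable n : nat.
Hypothesis pn : prime n.
Hypothesis n5 : (5 < n)%N.
Variable z : algC.
Hypothesis zP : n.-primitive_root z.
Variable G : seq 'Z_n.
Hypothesis HG : forall v : 'Z_n, perm_eq (mset_scale v G) G ->
     [|| v == -1, v == 0 | v == 1].
Hypothesis Hns : ~ symmetric_step G.

Lemma n1 : (1 < n)%N.
Proof. exact: prime_gt1. Qed.

Lemma two_bad : ~ perm_eq (mset_scale 2 G) G.
Proof.
move=> /HG /or3P [] /eqP E.
- have : ((3%N%:R : 'Z_n) == 0).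
    by rewrite (natrD _ 2 1) addr_eq0 E.
  by rewrite Zn_natr_eq0 ?n1 // => /(dvdn_leq (isT : (0 < 3)%N)); lia.
- have : ((2%N%:R : 'Z_n) == 0) by rewrite E.
  by rewrite Zn_natr_eq0 ?n1 // => /(dvdn_leq (isT : (0 < 2)%N)); lia.
- have : ((2%N%:R : 'Z_n) - 1 == 0) by rewrite E subrr.
  by rewrite (natrD _ 1 1) addrK oner_eq0.
Qed.

Lemma G_nil : G != [::].
Proof. by apply/eqP => G0; apply: two_bad; rewrite G0. Qed.

Lemma zero_bad : ~ perm_eq (mset_scale 0 G) G.
Proof.
move=> H; apply: two_bad.
have allz : forall g, g \in G -> g = 0.
  move=> g; rewrite -(perm_mem H) => /mapP [x _ ->]; by rewrite mul0r.
have -> : mset_scale 2 G = map id G.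
  by apply/eq_in_map => x /allz ->; rewrite mulr0.
by rewrite map_id.
Qed.

Lemma neg_bad : ~ perm_eq (mset_scale (-1) G) G.
Proof.
move=> H; apply: Hns => k; rewrite /gamma; congr (_ / _); congr (_%:R).
rewrite -(permP H) /mset_scale count_map; apply: eq_count => x /=.
by rewrite mulN1r eqr_oppLR.
Qed.

Definition hm (j : 'Z_n) (g : 'Z_n) : 'Z_n := -(g * j).

Lemma hm_inj j : j != 0 -> injective (hm j).
Proof.
move=> j0 x y; rewrite /hm => /oppr_inj; apply: mulIr; exact: Zn_unit.
Qed.

Lemma scale_lemma a b : a != 0 ->
  (forall x, count_mem x (map (hm a) G) = count_mem x (map (hm b) G)) -> a = b.
Proof.
move=> a0 Hc; have au := Zn_unit pn a0.
pose v := b * a^-1.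
have E : map (hm b) G = map (hm a) (mset_scale v G).
  rewrite /mset_scale -map_comp; apply: eq_map => g /=; rewrite /hm /v.
  by rewrite [b * _ * g]mulrAC (mulrVK au) mulrC.
have P : perm_eq (mset_scale v G) G.
  apply: (perm_map_inj (hm_inj a0)); rewrite -E.
  by apply/allP => x _; apply/eqP; rewrite Hc.
have := HG P; case/or3P => /eqP Hv.
- by exfalso; apply: neg_bad; rewrite -Hv.
- by exfalso; apply: zero_bad; rewrite -Hv.
- by apply/esym; rewrite -(mulrVK au b) -/v Hv mul1r.
Qed.

Lemma lamE j : lam z G j =
  (size G)%:R^-1 * \sum_x (count_mem x (map (hm j) G))%:R * z ^+ x.
Proof.
rewrite /lam (sum_nth G (fun g => e z (- (g * j)))).
by rewrite -(big_map (hm j) xpredT (e z)) sum_count.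
Qed.

Lemma cnt_LI (s1 s2 : seq 'Z_n) :
  \sum_x (count_mem x s1)%:R * z ^+ x = \sum_x (count_mem x s2)%:R * z ^+ x ->
  forall x, ((count_mem x s1)%:R - (count_mem x s2)%:R : rat) =
            (count_mem 0 s1)%:R - (count_mem 0 s2)%:R.
Proof.
move=> E; apply: (LI (c := fun x => (count_mem x s1)%:R - (count_mem x s2)%:R)) pn zP _.
under eq_bigr => x _ do rewrite rmorphB !rmorph_nat mulrBl.
by rewrite sumrB E subrr.
Qed.

Lemma sum_cnt (s : seq 'Z_n) : \sum_x ((count_mem x s)%:R : rat) = (size s)%:R.
Proof.
have := sum_count s (fun _ => (1 : rat)).
under [X in _ = X -> _]eq_bigr => x _ do rewrite mulr1.
move=> <-; by rewrite -sum1_size natr_sum.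
Qed.

Lemma cnt_eq_of (s1 s2 : seq 'Z_n) : size s1 = size s2 ->
  \sum_x (count_mem x s1)%:R * z ^+ x = \sum_x (count_mem x s2)%:R * z ^+ x ->
  forall x, count_mem x s1 = count_mem x s2.
Proof.
move=> sz E; have C := cnt_LI E.
set d := (_ - _ : rat) in C.
have d0 : d = 0.
  have : \sum_(x : 'Z_n) ((count_mem x s1)%:R - (count_mem x s2)%:R : rat) = 0.
    by rewrite sumrB !sum_cnt sz subrr.
  rewrite (eq_bigr _ (fun x _ => C x)) sumr_const card_ord => /eqP.
  by rewrite mulrn_eq0 /= => /eqP.
by move=> x; have := C x; rewrite d0 => /eqP; rewrite subr_eq0 eqr_nat => /eqP.
Qed.

Lemma NG0 : ((size G)%:R : algC) != 0.
Proof. by rewrite pnatr_eq0 size_eq0 G_nil. Qed.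

Lemma lam_inj : injective (lam z G).
Proof.
move=> a b E.
have E2 : \sum_x (count_mem x (map (hm a) G))%:R * z ^+ x =
          \sum_x (count_mem x (map (hm b) G))%:R * z ^+ x.
  by move: E; rewrite !lamE; apply: mulfI; rewrite invr_eq0 NG0.
have Hc := cnt_eq_of (etrans (size_map _ _) (esym (size_map _ _))) E2.
have [a0|a0] := eqVneq a 0; have [b0|b0] := eqVneq b 0.
- by rewrite a0 b0.
- by apply/esym/(scale_lemma b0) => x; rewrite Hc.
- exact: scale_lemma a0 Hc.
- exact: scale_lemma a0 Hc.
Qed.

Lemma lam0 : lam z G 0 = 1.
Proof.
rewrite /lam; under eq_bigr => i _ do rewrite mulr0 oppr0 e0.
by rewrite sumr_const card_ord mulVf ?NG0.
Qed.

Lemma lam_nz j : lam z G j != 0.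
Proof.
have [->|j0] := eqVneq j 0; first by rewrite lam0 oner_eq0.
apply/negP => /eqP E.
have E2 : \sum_x (count_mem x (map (hm j) G))%:R * z ^+ x =
          \sum_x (count_mem x ([::] : seq 'Z_n))%:R * z ^+ x.
  have : \sum_x (count_mem x (map (hm j) G))%:R * z ^+ x = 0.
    by move: E; rewrite lamE => /eqP; rewrite mulf_eq0 invr_eq0 (negbTE NG0) /= => /eqP.
  by move=> ->; symmetry; apply: big1 => x _; rewrite mul0r.
have C := cnt_LI E2.
have Cn : forall x, count_mem x (map (hm j) G) = count_mem 0 (map (hm j) G).
  by move=> x; have := C x; rewrite /= !subr0 => /eqP; rewrite eqr_nat => /eqP.
have u2 : (2 : 'Z_n) \is a GRing.unit.
  apply: Zn_unit => //; rewrite Zn_natr_eq0 ?n1 //.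
  by apply/negP => /(dvdn_leq (isT : (0 < 2)%N)); lia.
apply: two_bad; apply: (perm_map_inj (hm_inj j0)).
have -> : map (hm j) (mset_scale 2 G) = map (fun y => 2 * y) (map (hm j) G).
  by rewrite /mset_scale -!map_comp; apply: eq_map => g /=; rewrite /hm; ring.
apply/allP => x _; apply/eqP.
transitivity (count_mem (2^-1 * x) (map (hm j) G)).
  rewrite count_map; apply: eq_count => y /=.
  by rewrite (can2_eq (mulKr u2) (mulVKr u2)).
by rewrite (Cn (2^-1 * x)) (Cn x).
Qed.

Lemma M1 (f1 f2 : 'Z_n -> bool) : same_label_law G f1 f2 ->
  \sum_x (f1 x : nat) = \sum_x (f2 x : nat).
Proof.
move=> H; have := same_lpat [:: hid] H; rewrite /=.
under eq_bigr => x _ do rewrite mulr1 /hid.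
under [X in _ = X -> _]eq_bigr => x _ do rewrite mulr1 /hid.
rewrite -!mulr_sumr => /mulfI; rewrite invr_eq0 pnatr_eq0 -lt0n => E.
have : (0 < #|'Z_n|)%N by apply/card_gt0P; exists 0.
by move/E/eqP; rewrite -!natr_sum eqr_nat => /eqP.
Qed.

Lemma hat0 (F : 'Z_n -> algC) : hat z F 0 = \sum_y F y.
Proof. by apply: eq_bigr => y _; rewrite mulr0 e0 mulr1. Qed.

Lemma LIk (k : 'Z_n) (c : 'Z_n -> rat) : k != 0 ->
  \sum_y ratr (c y) * e z (y * k) = 0 -> forall y, c y = c 0.
Proof.
move=> k0 H; have zk : n.-primitive_root (z ^+ k).
  rewrite (prim_root_exp_coprime _ zP) coprime_sym prime_coprime //.
  have k_pos : (0 < (k:nat))%N.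
    by rewrite lt0n; apply: contra k0 => /eqP E; apply/eqP/val_inj.
  apply/negP => /(dvdn_leq k_pos); have := ltn_ord k; have := Zp_cast n1; lia.
apply: (LI pn zk); rewrite -[RHS]H; apply: eq_bigr => y _.
by rewrite (eM n1 zP) /e exprAC.
Qed.

Lemma hat_nz (f : 'Z_n -> bool) y0 : f y0 != f 0 ->
  forall k, hat z (fun y => ((f y : nat)%:R : algC)) k != 0.
Proof.
move=> Hy k; have [->|k0] := eqVneq k 0.
  rewrite hat0 -natr_sum pnatr_eq0 -lt0n.
  have [y fy] : exists y, f y by case E: (f 0); [exists 0 | exists y0; move: Hy; rewrite E; case: (f y0)].
  by rewrite (bigD1 y) //= fy.
apply/negP => /eqP H.
have C := LIk (c := fun y => ((f y : nat)%:R : rat)) k0.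
have : forall y, ((f y : nat)%:R : rat) = (f 0 : nat)%:R.
  apply: C; rewrite -[RHS]H; apply: eq_bigr => y _; by rewrite rmorph_nat.
move=> /(_ y0) /eqP; rewrite eqr_nat; move: Hy; by case: (f y0); case: (f 0).
Qed.

Lemma sum0_each (F : 'Z_n -> nat) k : \sum_x F x = 0%N -> F k = 0%N.
Proof. by rewrite (bigD1 k) //=; lia. Qed.

Lemma sum_compl (f : 'Z_n -> bool) :
  (\sum_x (f x : nat) + \sum_x (~~ f x : nat))%N = #|'Z_n|.
Proof.
rewrite -big_split /= -sum1_card; apply: eq_bigr => x _; by case: (f x).
Qed.

Lemma recon : reconstructive G.
Proof.
move=> f1 f2 H; have HM := M1 H.
case: (boolP [exists y, f1 y != f1 0]) => [/existsP [y0 Hy0] | Hc]; last first.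
  move: Hc; rewrite negb_exists => /forallP Hc.
  have Hc' : forall y, f1 y = f1 0 by move=> y; have := Hc y; rewrite negbK => /eqP.
  exists 0 => k; rewrite addr0 Hc'.
  have := sum_compl f1; have := sum_compl f2.
  case E0: (f1 0).
  - have S1 : \sum_x (~~ f1 x : nat) = 0%N by apply: big1 => x _; rewrite Hc' E0.
    rewrite S1 HM => <- /eqP; rewrite eqn_add2l => /eqP /esym /(sum0_each k).
    by case: (f2 k).
  - have S1 : \sum_x (f1 x : nat) = 0%N by apply: big1 => x _; rewrite Hc' E0.
    move=> _ _; move: HM; rewrite S1 => /esym /(sum0_each k).
    by case: (f2 k).
pose F1 y := ((f1 y : nat)%:R : algC).
pose F2 y := ((f2 y : nat)%:R : algC).
pose h1 := hat z F1.
pose h2 := hat z F2.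
have hz1 : forall k, h1 k != 0 by apply: hat_nz Hy0.
have Hm3 : forall s t, m3 G F1 s t = m3 G F2 s t by move=> s t; exact: same_m3.
have Cc : forall p : 'Z_n * 'Z_n,
    ac z F1 p.1 * ac z F1 p.2 * h1 (-(p.1 + p.2)) -
    ac z F2 p.1 * ac z F2 p.2 * h2 (-(p.1 + p.2)) = 0.
  apply: (vdm2 lam_inj lam_nz) => s t.
  under eq_bigr => p _ do rewrite !mulrBl.
  by rewrite sumrB -(m3_fourier n1 zP) -(m3_fourier n1 zP) Hm3 subrr.
have T : forall j k, h1 j * h1 k * h1 (-(j + k)) = h2 j * h2 k * h2 (-(j + k)).
  move=> j k; have /eqP := Cc (j, k); rewrite subr_eq0 /ac /h1 /h2 /= => /eqP E.
  have nn : (n%:R^-1 * n%:R^-1 : algC) != 0.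
    by rewrite mulf_eq0 invr_eq0 (negbTE (n_neq0 n1)).
  apply: (mulfI nn); rewrite /h1 /h2.
  transitivity (n%:R^-1 * hat z F1 j * (n%:R^-1 * hat z F1 k) * hat z F1 (-(j + k))); first ring.
  by rewrite E; ring.
have h0 : h1 0 = h2 0.
  by rewrite /h1 /h2 !hat0 /F1 /F2 -!natr_sum HM.
have hz2 : forall k, h2 k != 0.
  move=> k; have := T 0 k; rewrite add0r => E.
  have : h1 0 * h1 k * h1 (- k) != 0 by rewrite !mulf_neq0.
  by rewrite E !mulf_eq0 => /norP [/norP [_ ->]].
pose r k := h1 k / h2 k.
have rnz : forall k, r k != 0 by move=> k; rewrite mulf_neq0 ?invr_eq0.
have rT : forall j k, r j * r k * r (-(j + k)) = 1.
  move=> j k; rewrite /r.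
  have nz : h2 j * h2 k * h2 (-(j + k)) != 0 by rewrite !mulf_neq0.
  transitivity ((h1 j * h1 k * h1 (-(j + k))) / (h2 j * h2 k * h2 (-(j + k)))).
    by rewrite !invfM; ring.
  by rewrite T mulfV.
have r0 : r 0 = 1 by rewrite /r h0 mulfV.
have rN : forall k, r k * r (- k) = 1.
  by move=> k; have := rT 0 k; rewrite r0 mul1r add0r.
have rD : forall j k, r (j + k) = r j * r k.
  move=> j k; apply: (mulIf (rnz (-(j + k)))).
  by rewrite rT rN.
have rn : forall m, r (m%:R) = r 1 ^+ m.
  elim=> [|m IH]; first by rewrite r0 expr0.
  by rewrite -natr1 rD IH exprSr.
have r1n : r 1 ^+ n = 1.
  rewrite -rn; have -> : (n%:R : 'Z_n) = 0 by apply/eqP; rewrite Zn_natr_eq0 ?n1.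
  exact: r0.
case: (prim_rootP zP r1n) => i Hi.
pose l : 'Z_n := - (i%:R).
have rk : forall k : 'Z_n, e z (-(l * k)) = r k.
  move=> k; rewrite mulNr opprK (eM n1 zP) /e /= Zp_nat /=.
  rewrite (prim_expr_mod (zP' n1 zP)) -Hi -rn.
  by rewrite natr_Zp.
exists l => x.
have : F1 x = F2 (x + l).
  rewrite (inv n1 zP F1 x) (inv n1 zP F2 (x + l)); apply: eq_bigr => k _.
  rewrite /ac -/h1 -/h2.
  have -> : e z (-((x + l) * k)) = e z (-(l * k)) * e z (-(x * k)).
    by rewrite -(eD n1 zP); congr (e z _); ring.
  by rewrite rk mulrA -(mulrA _ (h2 k)) [h2 k * r k]mulrC /r divfK.
rewrite /F1 /F2 => /eqP; rewrite eqr_nat.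
by case: (f1 x); case: (f2 (x + l)).
Qed.
End Main.

Theorem lemma4 (n : nat) (G : seq 'Z_n) :
  prime n -> (5 < n)%N ->
  (forall v : 'Z_n, perm_eq (mset_scale v G) G ->
     [|| v == -1, v == 0 | v == 1]) ->
  symmetric_step G \/ reconstructive G.
Proof.
move=> pn n5 HG.
case: (classic (symmetric_step G)) => Hs; [by left | right].
have [z zP] := C_prim_root_exists (prime_gt0 pn).
exact: (recon pn n5 zP HG Hs).
Qed.
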